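(* Let $n\ge3$ and let $R,V_1,\ldots,V_{n-1}\in H^1(K_n;\mathbb{Z}_2)$ be classes giving an algebra isomorphism $H^*(K_n;\mathbb{Z}_2)\cong\mathbb{Z}_2[R,V_1,\ldots,V_{n-1}]/(R^2,V_i^2+RV_i)$. For $x\in H^1(K_n;\mathbb{Z}_2)$ write $\overline{x}=x\otimes1+1\otimes x\in H^1(K_n\times K_n;\mathbb{Z}_2)$. Then in $H^*(K_n\times K_n;\mathbb{Z}_2)$, $$\overline{V}_1^{\,3}\,\overline{V}_2^{\,2}\,\overline{V}_3\cdots\overline{V}_{n-1}\ne0,$$ but every product of at least $n+3$ factors, each of the form $\overline{V}_i$ or $\overline{R}$, is $0$.
   Context: $K_n=(S^1)^n/\bigl((z_1,\ldots,z_{n-1},z_n)\sim(\overline{z}_1,\ldots,\overline{z}_{n-1},-z_n)\bigr)$, where $S^1\subset\mathbb{C}$ is the unit circle and $\overline{z}$ is complex conjugation. $H^*(K_n\times K_n;\mathbb{Z}_2)$ is identified with $H^*(K_n;\mathbb{Z}_2)\otimes H^*(K_n;\mathbb{Z}_2)$ via the Künneth isomorphism. *)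

(* Defs.v *)
From HB Require Import structures.
From mathcomp Require Import all_boot all_order all_algebra.
Set Implicit Arguments. Unset Strict Implicit. Unset Printing Implicit Defensive.
Import GRing.Theory.
Local Open Scope ring_scope.

(* Concrete model of  A_n := Z_2[R,V_1,...,V_{n-1}]/(R^2, V_i^2 + R V_i)
   (which is H^*(K_n;Z_2) by hypothesis) and of its tensor square A_n (x) A_n
   (which is H^*(K_n x K_n;Z_2) by Kunneth).

   A_n has the Z_2-basis of monomials  R^a * prod_{i in S} V_i,
   a in {0,1}, S a subset of {V_1,...,V_{n-1}}; generator V_i is indexed by
   the ordinal  i-1 : 'I_(n-1).  Since V_i^2 = R V_i and R^2 = 0, the product of
   basis monomials (a,S),(b,T) is R^(a+b+|S/\T|) prod_{S\/T} V, which is the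
   basis monomial (true, S :|: T) or (false, S :|: T) if that exponent is <= 1,
   and 0 otherwise. *)

Definition monA (n : nat) : finType := (bool * {set 'I_(n.-1)})%type.

Definition mulmonA (n : nat) (p q : monA n) : option (monA n) :=
  let k := (p.1 : nat) + (q.1 : nat) + #|p.2 :&: q.2| in
  if (k <= 1)%N then Some (k == 1%N, p.2 :|: q.2) else None.

(* Basis monomials of A_n (x) A_n: x (x) y with x, y basis monomials of A_n.
   (Coefficients are in Z_2, so no Koszul signs.) *)
Definition monT (n : nat) : finType := (monA n * monA n)%type.

Definition mulmonT (n : nat) (p q : monT n) : option (monT n) :=
  match mulmonA p.1 q.1, mulmonA p.2 q.2 with
  | Some r1, Some r2 => Some (r1, r2)
  | _, _ => None
  end.

Definition elT (n : nat) := {ffun monT n -> 'F_2}.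

Definition basisT (n : nat) (m : monT n) : elT n := [ffun m' => (m' == m)%:R].

Definition mulT (n : nat) (x y : elT n) : elT n :=
  [ffun m => \sum_(p : monT n) \sum_(q : monT n)
               (if mulmonT p q == Some m then x p * y q else 0)].

Definition oneT (n : nat) : elT n := basisT ((false, set0), (false, set0)).

Definition prodT (n : nat) (s : seq (elT n)) : elT n := foldr (@mulT n) (oneT n) s.

Definition R_l (n : nat) : elT n := basisT ((true, set0), (false, set0)).
Definition R_r (n : nat) : elT n := basisT ((false, set0), (true, set0)).
Definition V_l (n : nat) (j : 'I_(n.-1)) : elT n := basisT ((false, [set j]), (false, set0)).
Definition V_r (n : nat) (j : 'I_(n.-1)) : elT n := basisT ((false, set0), (false, [set j])).

Definition Rbar (n : nat) : elT n := R_l n + R_r n.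
(* \overline{V}_{j+1} for j : 'I_(n-1) *)
Definition Vbar (n : nat) (j : 'I_(n.-1)) : elT n := V_l j + V_r j.
(* \overline{V}_i with the paper's 1-based index i (1 <= i <= n-1); 0 otherwise *)
Definition Vb (n : nat) (i : nat) : elT n := \sum_(j : 'I_(n.-1) | j.+1 == i) Vbar j.

Definition factor (n : nat) (o : option 'I_(n.-1)) : elT n :=
  if o is Some j then Vbar j else Rbar n.

(* Main.v *)
Require Import Defs.
From HB Require Import structures.
From mathcomp Require Import all_boot all_order all_algebra.
From mathcomp Require Import zify.
Set Implicit Arguments. Unset Strict Implicit. Unset Printing Implicit Defensive.
Import GRing.Theory.
Local Open Scope ring_scope.

Lemma F2_double (z : 'F_2) : z + z = 0.
Proof. by rewrite -mulr2n -mulr_natr (@pchar_Fp_0 2) // mulr0. Qed.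

Section Alg.
Variable n : nat.
Local Notation elT := (elT n).
Local Notation monA := (monA n).
Local Notation monT := (monT n).

Lemma elT_double (x : elT) : x + x = 0.
Proof. by apply/ffunP => m; rewrite !ffunE F2_double. Qed.

Lemma mulmonAE (a b : bool) (S T : {set 'I_(n.-1)}) :
  mulmonA (a, S) (b, T) =
  if (a + b + #|S :&: T| <= 1)%N then Some ((a + b + #|S :&: T|)%N == 1%N, S :|: T)
  else None.
Proof. by []. Qed.

Lemma mulmonAC (p q : monA) : mulmonA p q = mulmonA q p.
Proof. by case: p => a S; case: q => b T; rewrite !mulmonAE (addnC b) setIC setUC. Qed.

Lemma mulmonTC (p q : monT) : mulmonT p q = mulmonT q p.
Proof. by rewrite /mulmonT mulmonAC [mulmonA p.2 _]mulmonAC. Qed.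

Lemma mulTC (x y : elT) : mulT x y = mulT y x.
Proof.
apply/ffunP => m; rewrite !ffunE exchange_big /=.
apply: eq_bigr => p _; apply: eq_bigr => q _.
by rewrite mulmonTC mulrC.
Qed.

Lemma mulTDl (x y z : elT) : mulT (x + y) z = mulT x z + mulT y z.
Proof.
apply/ffunP => m; rewrite !ffunE -big_split; apply: eq_bigr => p _.
rewrite -big_split; apply: eq_bigr => q _; rewrite ffunE.
by case: (mulmonT p q == Some m); rewrite /= ?mulrDl ?addr0.
Qed.

Lemma mulTDr (x y z : elT) : mulT x (y + z) = mulT x y + mulT x z.
Proof. by rewrite mulTC mulTDl !(mulTC x). Qed.

Lemma mul0T (x : elT) : mulT 0 x = 0.
Proof.
apply/ffunP => m; rewrite !ffunE big1 // => p _; rewrite big1 // => q _.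
by rewrite ffunE mul0r; case: ifP.
Qed.

Lemma mulT0 (x : elT) : mulT x 0 = 0.
Proof. by rewrite mulTC mul0T. Qed.

Definition bo (o : option monT) : elT := [ffun m => (o == Some m)%:R].

Lemma mulT_basis (p q : monT) : mulT (basisT p) (basisT q) = bo (mulmonT p q).
Proof.
apply/ffunP => m; rewrite !ffunE (bigD1 p) //= [X in _ + X]big1 => [|p' hp']; last first.
  by rewrite big1 // => q' _; rewrite !ffunE (negbTE hp') mul0r; case: (_ == _).
rewrite addr0 (bigD1 q) //= [X in _ + X]big1 => [|q' hq']; last first.
  by rewrite !ffunE (negbTE hq') mulr0; case: (_ == _).
by rewrite !ffunE !eqxx mulr1 addr0; case: (_ == _).
Qed.

Lemma bo_None : bo None = 0.
Proof. by apply/ffunP => m; rewrite !ffunE. Qed.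

Lemma bo_Some m : bo (Some m) = basisT m.
Proof. apply/ffunP => w; rewrite !ffunE; case: (w =P m) => [->|h]; rewrite ?eqxx //; case: eqP => // -[] /esym /h []. Qed.


Lemma cardI3 (S T U : {set 'I_(n.-1)}) :
  (#|S :&: T| + #|(S :|: T) :&: U| = #|T :&: U| + #|S :&: (T :|: U)|)%N.
Proof.
have e1 := cardsUI (S :&: U) (T :&: U).
have e2 := cardsUI (S :&: T) (S :&: U).
rewrite -setIUl in e1; rewrite -setIUr in e2.
have E : (S :&: U) :&: (T :&: U) = (S :&: T) :&: (S :&: U).
  by apply/setP => e; rewrite !inE; case: (e \in S); case: (e \in T); case: (e \in U).
rewrite E in e1; lia.
Qed.

Lemma mulmonA_assoc (a b c : monA) :
  obind (fun r => mulmonA r c) (mulmonA a b) = obind (mulmonA a) (mulmonA b c).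
Proof.
case: a => x S; case: b => y T; case: c => z U.
have e := cardI3 S T U.
rewrite mulmonAE [mulmonA (y, T) _]mulmonAE.
case: (leqP (x + y + #|S :&: T|) 1) => h1; case: (leqP (y + z + #|T :&: U|) 1) => h2 /=;
  rewrite ?mulmonAE.
- have q1 : nat_of_bool ((x + y + #|S :&: T|)%N == 1%N) = (x + y + #|S :&: T|)%N.
    by case: (x + y + #|S :&: T|)%N h1 => [|[|]].
  have q2 : nat_of_bool ((y + z + #|T :&: U|)%N == 1%N) = (y + z + #|T :&: U|)%N.
    by case: (y + z + #|T :&: U|)%N h2 => [|[|]].
  rewrite q1 q2 setUA.
  have -> : (x + y + #|S :&: T| + z + #|(S :|: T) :&: U|)%N =
            (x + (y + z + #|T :&: U|) + #|S :&: (T :|: U)|)%N by lia.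
  done.
- have q1 : nat_of_bool ((x + y + #|S :&: T|)%N == 1%N) = (x + y + #|S :&: T|)%N.
    by case: (x + y + #|S :&: T|)%N h1 => [|[|]].
  rewrite q1; case: leqP => // h; lia.
- have q2 : nat_of_bool ((y + z + #|T :&: U|)%N == 1%N) = (y + z + #|T :&: U|)%N.
    by case: (y + z + #|T :&: U|)%N h2 => [|[|]].
  rewrite q2; case: leqP => // h; lia.
- done.
Qed.

Definition pairo (o1 o2 : option monA) : option monT :=
  match o1, o2 with Some r1, Some r2 => Some (r1, r2) | _, _ => None end.

Lemma mulmonT_assoc (a b c : monT) :
  obind (fun r => mulmonT r c) (mulmonT a b) = obind (mulmonT a) (mulmonT b c).
Proof.
have L : obind (fun r => mulmonT r c) (mulmonT a b) =
  pairo (obind (fun r => mulmonA r c.1) (mulmonA a.1 b.1))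
        (obind (fun r => mulmonA r c.2) (mulmonA a.2 b.2)).
  rewrite /mulmonT; case: (mulmonA a.1 b.1) => [r1|]; case: (mulmonA a.2 b.2) => [r2|] //=;
  by do ?[case: (mulmonA _ _) => [?|] /=].
have R : obind (mulmonT a) (mulmonT b c) =
  pairo (obind (mulmonA a.1) (mulmonA b.1 c.1))
        (obind (mulmonA a.2) (mulmonA b.2 c.2)).
  rewrite /mulmonT; case: (mulmonA b.1 c.1) => [r1|]; case: (mulmonA b.2 c.2) => [r2|] //=;
  by do ?[case: (mulmonA _ _) => [?|] /=].
by rewrite L R !mulmonA_assoc.
Qed.

Lemma if_sum (c : bool) (I : finType) (f : I -> 'F_2) :
  (if c then \sum_i f i else 0) = \sum_i (if c then f i else 0).
Proof. by case: c => //; rewrite big1. Qed.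

Lemma sum_collapse (o : option monT) (m : monT) (f : monT -> 'F_2) :
  \sum_p (if o == Some p then f p else 0) = (match o with Some p => f p | None => 0 end).
Proof.
case: o => [p0|]; last by rewrite big1.
rewrite (bigD1 p0) //= eqxx big1 ?addr0 // => p hp.
by case: eqP => // -[] /esym/eqP; rewrite (negbTE hp).
Qed.

Lemma mulTA (x y z : elT) : mulT (mulT x y) z = mulT x (mulT y z).
Proof.
apply/ffunP => m.
transitivity (\sum_a \sum_b \sum_c
   (if obind (fun r => mulmonT r c) (mulmonT a b) == Some m then x a * y b * z c else 0)).
  rewrite ffunE.
  under eq_bigr => p _ do under eq_bigr => r _ do
    rewrite ffunE big_distrl if_sum.
  under eq_bigr => p _ do under eq_bigr => r _ do under eq_bigr => i _ do
    rewrite big_distrl if_sum.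
  rewrite exchange_big /=.
  under eq_bigr => r _ do rewrite exchange_big /=.
  under eq_bigr => r _ do under eq_bigr => i _ do rewrite exchange_big /=.
  rewrite exchange_big /=.
  under eq_bigr => i _ do rewrite exchange_big /=.
  apply: eq_bigr => a _; apply: eq_bigr => b _; apply: eq_bigr => c _.
  transitivity (\sum_p (if mulmonT a b == Some p then
     (if mulmonT p c == Some m then x a * y b * z c else 0) else 0)).
    apply: eq_bigr => p _.
    by case: (mulmonT p c == Some m); case: (mulmonT a b == Some p); rewrite ?mul0r.
  by rewrite sum_collapse; case: (mulmonT a b).
transitivity (\sum_a \sum_b \sum_c
   (if obind (mulmonT a) (mulmonT b c) == Some m then x a * y b * z c else 0)).
  apply: eq_bigr => a _; apply: eq_bigr => b _; apply: eq_bigr => c _.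
  by rewrite mulmonT_assoc.
rewrite ffunE; apply: eq_bigr => a _.
symmetry.
under eq_bigr => q _ do rewrite ffunE big_distrr if_sum.
under eq_bigr => q _ do under eq_bigr => i _ do rewrite big_distrr if_sum.
rewrite exchange_big /=; apply: eq_bigr => b _.
rewrite exchange_big /=; apply: eq_bigr => c _.
transitivity (\sum_q (if mulmonT b c == Some q then
     (if mulmonT a q == Some m then x a * y b * z c else 0) else 0)).
  apply: eq_bigr => q _.
  by case: (mulmonT a q == Some m); case: (mulmonT b c == Some q); rewrite ?mulr0 ?mulrA.
by rewrite sum_collapse; case: (mulmonT b c).
Qed.


Lemma mA_0l (p : monA) : mulmonA (false, set0) p = Some p.
Proof. by case: p => b T; rewrite mulmonAE set0I cards0 set0U addn0; case: b. Qed.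

Lemma mA_0r (p : monA) : mulmonA p (false, set0) = Some p.
Proof. by rewrite mulmonAC mA_0l. Qed.

Lemma mA_tt (S T : {set 'I_(n.-1)}) : mulmonA (true, S) (true, T) = None.
Proof. by rewrite mulmonAE. Qed.

Lemma mA_disj (a b : bool) (S T : {set 'I_(n.-1)}) : S :&: T = set0 -> ~~ (a && b) ->
  mulmonA (a, S) (b, T) = Some (a || b, S :|: T).
Proof. by move=> h; rewrite mulmonAE h cards0 addn0; case: a; case: b. Qed.

Lemma mA_ff (i : 'I_(n.-1)) : mulmonA (false, [set i]) (false, [set i]) = Some (true, [set i]).
Proof. by rewrite mulmonAE setIid cards1 setUid. Qed.

Lemma mA_tf (i : 'I_(n.-1)) : mulmonA (true, [set i]) (false, [set i]) = None.
Proof. by rewrite mulmonAE setIid cards1. Qed.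

Lemma mA_ft (i : 'I_(n.-1)) : mulmonA (false, [set i]) (true, [set i]) = None.
Proof. by rewrite mulmonAE setIid cards1. Qed.

Lemma set1I0 (i k : 'I_(n.-1)) : i != k -> [set i] :&: [set k] = set0.
Proof.
move=> h; apply/setP => e; rewrite !inE; case: (e =P i) => // ->.
by rewrite (negbTE h).
Qed.

Lemma mT_1l (q : monT) : mulmonT ((false, set0), (false, set0)) q = Some q.
Proof. by case: q => ? ?; rewrite /mulmonT /= !mA_0l. Qed.

Lemma mul1T (x : elT) : mulT (oneT n) x = x.
Proof.
apply/ffunP => m; rewrite ffunE (bigD1 ((false, set0), (false, set0))) //=.
rewrite [X in _ + X]big1 => [|p hp]; last first.
  by rewrite big1 // => q _; rewrite ffunE (negbTE hp) mul0r; case: (_ == _).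
rewrite addr0 (bigD1 m) //= [X in _ + X]big1 => [|q hq]; last first.
  by rewrite mT_1l; case: eqP => // -[] /eqP; rewrite (negbTE hq).
by rewrite mT_1l ffunE !eqxx mul1r addr0.
Qed.

Lemma mulT1 (x : elT) : mulT x (oneT n) = x.
Proof. by rewrite mulTC mul1T. Qed.

Lemma add_cancel (A B D : elT) : (A + B) + (B + D) = A + D.
Proof. by rewrite addrA -(addrA A B B) elT_double addr0. Qed.

Ltac mc := rewrite ?mulT_basis /mulmonT /= ?mA_0l ?mA_0r ?mA_tt ?mA_ff ?mA_tf ?mA_ft /=
  ?bo_None ?bo_Some ?set0U ?setU0 ?addr0 ?add0r.

Definition aa (i : 'I_(n.-1)) : elT := basisT ((true, [set i]), (false, set0)).
Definition bb (i : 'I_(n.-1)) : elT := basisT ((false, set0), (true, [set i])).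
Definition cc (i : 'I_(n.-1)) : elT := basisT ((false, [set i]), (true, [set i])).
Definition dd (i : 'I_(n.-1)) : elT := basisT ((true, [set i]), (false, [set i])).
Definition ff (i k : 'I_(n.-1)) : elT := basisT ((true, [set i]), (true, [set k])).

End Alg.

Definition bT n := locked (@basisT n).
Lemma bTE n : @basisT n = @bT n. Proof. by rewrite /bT -lock. Qed.
Definition bo2 n (o : option (monT n)) : elT n := if o is Some m then bT m else 0.

Lemma mulT_bT n (p q : monT n) : mulT (bT p) (bT q) = bo2 (mulmonT p q).
Proof. by rewrite -!bTE mulT_basis; case: (mulmonT p q) => [m|] /=; rewrite ?bo_None ?bo_Some ?bTE. Qed.

Ltac mc := rewrite ?mulT_bT /mulmonT /= ?mA_0l ?mA_0r ?mA_tt ?mA_ff ?mA_tf ?mA_ft /=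
  ?set0U ?setU0 ?addr0 ?add0r.

Section Comp.
Variable n : nat.
Implicit Types i k : 'I_(n.-1).
Definition vl i : elT n := bT ((false, [set i]), (false, set0)).
Definition vr i : elT n := bT ((false, set0), (false, [set i])).
Definition rl : elT n := bT ((true, set0), (false, set0)).
Definition rr : elT n := bT ((false, set0), (true, set0)).
Definition a2 i : elT n := bT ((true, [set i]), (false, set0)).
Definition b2 i : elT n := bT ((false, set0), (true, [set i])).
Definition c2 i : elT n := bT ((false, [set i]), (true, [set i])).
Definition d2 i : elT n := bT ((true, [set i]), (false, [set i])).
Definition f2 i k : elT n := bT ((true, [set i]), (true, [set k])).

Lemma VbarE i : Vbar i = vl i + vr i.
Proof. by rewrite /Vbar /V_l /V_r !bTE. Qed.
Lemma RbarE : Rbar n = rl + rr.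
Proof. by rewrite /Rbar /R_l /R_r !bTE. Qed.

Lemma VV i : mulT (Vbar i) (Vbar i) = a2 i + b2 i.
Proof.
rewrite VbarE mulTDl !mulTDr (mulTC (vr i) (vl i)) add_cancel /vl /vr.
by mc.
Qed.

Lemma VVV i : mulT (Vbar i) (mulT (Vbar i) (Vbar i)) = c2 i + d2 i.
Proof.
rewrite VV VbarE mulTDl !mulTDr /vl /vr /a2 /b2; mc.
by rewrite addrC.
Qed.

Lemma VVVV i : mulT (Vbar i) (mulT (Vbar i) (mulT (Vbar i) (Vbar i))) = 0.
Proof.
rewrite VVV VbarE mulTDl !mulTDr /vl /vr /c2 /d2; mc.
by rewrite elT_double.
Qed.

Lemma RR : mulT (Rbar n) (Rbar n) = 0.
Proof.
rewrite RbarE mulTDl !mulTDr (mulTC rr rl) add_cancel /rl /rr.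
by mc.
Qed.

Lemma QQ i k : mulT (a2 i + b2 i) (a2 k + b2 k) = f2 i k + f2 k i.
Proof. by rewrite mulTDl !mulTDr /a2 /b2 /f2; mc. Qed.

Lemma QF i k l : mulT (a2 i + b2 i) (f2 k l + f2 l k) = 0.
Proof. by rewrite mulTDl !mulTDr /a2 /b2 /f2; mc. Qed.

Lemma RF k l : mulT (Rbar n) (f2 k l + f2 l k) = 0.
Proof. by rewrite RbarE /rl /rr mulTDl !mulTDr /f2; mc. Qed.

Lemma CD i k : i != k -> mulT (c2 i + d2 i) (c2 k + d2 k) = 0.
Proof.
move=> h; have h' : k != i by rewrite eq_sym.
rewrite mulTDl !mulTDr /c2 /d2; mc.
rewrite !mA_disj ?set1I0 //=; mc.
by rewrite elT_double.
Qed.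
End Comp.

Local Close Scope ring_scope.

Section P2.
Variable n : nat.
Local Notation P s := (prodT [seq @factor n o | o <- s]).

Lemma prodT_cat (s1 s2 : seq (elT n)) : prodT (s1 ++ s2) = mulT (prodT s1) (prodT s2).
Proof. elim: s1 => [|x s1 IH] /=; first by rewrite mul1T. by rewrite IH mulTA. Qed.

Lemma mulT_swap (x y z : elT n) : mulT x (mulT y z) = mulT y (mulT x z).
Proof. by rewrite -!mulTA (mulTC x y). Qed.

Lemma pull (o : option 'I_(n.-1)) s : o \in s -> P s = mulT (factor o) (P (rem o s)).
Proof.
elim: s => [|x s IH] //= ho.
case: (x =P o) => [->|hx] //.
have ho' : o \in s by move: ho; rewrite inE; case: eqP => // e; case: hx.
by rewrite /= IH // mulT_swap.
Qed.

Lemma sub_pull (b s : seq (option 'I_(n.-1))) :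
  (forall x, count_mem x b <= count_mem x s) -> exists s', P s = mulT (P b) (P s').
Proof.
elim: b s => [|o b IH] s h; first by exists s; rewrite /= mul1T.
have os : o \in s.
  by rewrite -has_pred1 has_count; have := h o; rewrite /= eqxx; lia.
have hp := perm_to_rem os.
have [s' e] : exists s', P (rem o s) = mulT (P b) (P s').
  apply: IH => x; have := h x; rewrite (permP hp) /=; lia.
by exists s'; rewrite (pull os) e /= mulTA.
Qed.

Lemma sq_assoc (x z : elT n) : mulT x (mulT x z) = mulT (mulT x x) z.
Proof. by rewrite mulTA. Qed.
Lemma cube_assoc (x z : elT n) : mulT x (mulT x (mulT x z)) = mulT (mulT x (mulT x x)) z.
Proof. by rewrite !mulTA. Qed.

Lemma bad1 : P [:: None; None] = 0%R.
Proof.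
rewrite /=; move: (mulT1 (Rbar n)) (@RR n); move: (oneT n) (Rbar n) => O X e h.
by rewrite e h.
Qed.
Lemma bad2 j : P [:: Some j; Some j; Some j; Some j] = 0%R.
Proof.
rewrite /=; move: (mulT1 (Vbar j)) (VVVV j); move: (oneT n) (Vbar j) => O X e h.
by rewrite e h.
Qed.
Lemma bad3 i k l : P [:: Some i; Some i; Some k; Some k; Some l; Some l] = 0%R.
Proof.
rewrite /=; move: (mulT1 (Vbar l)) (VV i) (VV k) (VV l).
move: (oneT n) (Vbar i) (Vbar k) (Vbar l) => O X Y Z e hX hY hZ.
by rewrite e (sq_assoc X) (sq_assoc Y) hX hY hZ QQ QF.
Qed.
Lemma bad4 i k : P [:: None; Some i; Some i; Some k; Some k] = 0%R.
Proof.
rewrite /=; move: (mulT1 (Vbar k)) (VV i) (VV k) (RF (n:=n)).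
move: (oneT n) (Vbar i) (Vbar k) (Rbar n) => O X Y R e hX hY hR.
by rewrite e (sq_assoc X) hX hY QQ hR.
Qed.
Lemma bad5 i k : i != k -> P [:: Some i; Some i; Some i; Some k; Some k; Some k] = 0%R.
Proof.
move=> h; rewrite /=; move: (mulT1 (Vbar k)) (VVV i) (VVV k).
move: (oneT n) (Vbar i) (Vbar k) => O X Y e hX hY.
by rewrite e (cube_assoc X) hX hY CD.
Qed.

Lemma size_dec (s : seq (option 'I_(n.-1))) :
  size s = (count_mem None s + \sum_j count_mem (Some j) s)%N.
Proof.
elim: s => [|x s IH] /=; first by rewrite big1.
rewrite big_split /= IH.
have -> : (\sum_(j < n.-1) (x == Some j))%N = (x != None).
  case: x => [k|]; last by rewrite big1.
  rewrite (bigD1 k) //= eqxx big1 // => j hj.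
  by case: eqP => // -[] e; rewrite e eqxx in hj.
case: x => //=; lia.
Qed.


Lemma sub_of (b s : seq (option 'I_(n.-1))) :
  (forall y, y \in b -> count_mem y b <= count_mem y s) ->
  forall x, count_mem x b <= count_mem x s.
Proof.
move=> h x; case: (boolP (x \in b)) => hx; first exact: h.
by rewrite (count_memPn hx).
Qed.

Lemma eqS (u v : 'I_(n.-1)) : (Some u == Some v) = (u == v).
Proof. by []. Qed.

Lemma comb (m a : nat) (e : 'I_m -> nat) : (m + 4 <= a + \sum_(j < m) e j)%N ->
  (2 <= a) \/ (exists j, 4 <= e j) \/
      (exists i k, (i != k) /\ (1 <= a) /\ (2 <= e i) /\ (2 <= e k)) \/
      (exists i k l, (i != k) /\ (i != l) /\ (k != l) /\ (2 <= e i) /\ (2 <= e k) /\ (2 <= e l)) \/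
      (exists i k, (i != k) /\ (e i = 3) /\ (e k = 3)).
Proof.
move=> hs.
have hsum1 : (\sum_(j < m) 1)%N = m by rewrite sum1_card card_ord.
case: (leqP 2 a) => ha; first by left.
case: (boolP [exists j, 4 <= e j]) => [/existsP [j hj] | hE4]; first by right; left; exists j.
have hE : forall j, e j <= 3.
  by move=> j; move/existsPn: hE4 => /(_ j); rewrite leqNgt negbK.
case: (boolP [exists i, 2 <= e i]) => [/existsP [i hi] | hno]; last first.
  have : (\sum_(j < m) e j <= \sum_(j < m) 1)%N.
    apply: leq_sum => j _; move/existsPn: hno => /(_ j); rewrite -ltnNge; lia.
  lia.
rewrite (bigD1 i) //= in hs.
have hsum2 := hsum1; rewrite (bigD1 i) //= in hsum2.
case: (boolP [exists k, (k != i) && (2 <= e k)]) => [/existsP [k /andP [ki hk]] | hno]; last first.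
  match type of hs with context [ (e i + ?X)%N ] =>
  match type of hsum2 with (1 + ?Y)%N = _ =>
    have : (X <= Y)%N by apply: leq_sum => j ji; move/existsPn: hno => /(_ j);
      rewrite ji /= -ltnNge; lia
  end end.
  have := hE i => hEi h; exfalso; match type of h with is_true (leq ?X ?Y) => move: hs hsum2 h; generalize X Y => X0 Y0 hs0 hsum0 h0; lia end.
have ik : i != k by rewrite eq_sym.
case: (leqP 1 a) => ha1; first by right; right; left; exists i, k.
rewrite (bigD1 k) //= in hs; rewrite (bigD1 k) //= in hsum2.
case: (boolP [exists l, [&& l != i, l != k & 2 <= e l]]) => [/existsP [l /and3P [li lk hl]] | hno].
  by right; right; right; left; exists i, k, l; rewrite ik (eq_sym i) li (eq_sym k) lk.
case: (boolP ((e i == 3) && (e k == 3))) => [/andP [/eqP ei3 /eqP ek3] | hne].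
  by right; right; right; right; exists i, k.
match type of hs with context [ (e k + ?X)%N ] =>
match type of hsum2 with (1 + (1 + ?Y))%N = _ =>
  have : (X <= Y)%N by apply: leq_sum => j /andP [ji jk]; move/existsPn: hno => /(_ j);
    rewrite ji jk /= -ltnNge; lia
end end.
move=> h; have := hE i; have := hE k; move: hne; rewrite negb_and => hne h1 h2.
exfalso; match type of h with is_true (leq ?X ?Y) =>
  move: hs hsum2 h; generalize X Y => X0 Y0 hs0 hsum0 h0 end.
case/orP: hne => /eqP hne; lia.
Qed.

Ltac cl := first [ assumption |
  match goal with H : _ = 3 |- _ => by rewrite H end ].

Lemma part2 (hn : (3 <= n)%N) (s : seq (option 'I_(n.-1))) : (n + 3 <= size s)%N -> P s = 0%R.
Proof.
move=> hs.
suff [b [hb0 hsub]] : exists b, P b = 0%R /\ (forall x, count_mem x b <= count_mem x s).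
  by have [s' ->] := sub_pull hsub; rewrite hb0 mul0T.
have hsz := size_dec s.
have : (n.-1 + 4 <= count_mem None s + \sum_j count_mem (Some j) s)%N by rewrite -hsz; lia.
case/comb => [ha | [[j hj] | [[i [k [ik [ha1 [hi hk]]]]] | [[i [k [l [ik [il [kl [hi [hk hl]]]]]]]]
             | [i [k [ik [ei3 ek3]]]]]]]].
- exists [:: None; None]; split; first exact: bad1.
  by apply: sub_of => y; rewrite !inE => /orP [] /eqP -> /=.
- exists [:: Some j; Some j; Some j; Some j]; split; first exact: bad2.
  apply: sub_of => y; rewrite !inE => /or4P [] /eqP -> /=; rewrite eqxx /=; cl.
- have ki' : (k == i) = false by apply/negbTE; rewrite eq_sym.
  have ik' : (i == k) = false by apply/negbTE.
  exists [:: None; Some i; Some i; Some k; Some k]; split; first exact: bad4.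
  apply: sub_of => y; rewrite !inE => hy; repeat (case/orP: hy => hy); move/eqP: hy => -> /=;
    rewrite ?eqS ?eqxx ?ik' ?ki' /=; cl.
- have ki' : (k == i) = false by apply/negbTE; rewrite eq_sym.
  have ik' : (i == k) = false by apply/negbTE.
  have li' : (l == i) = false by apply/negbTE; rewrite eq_sym.
  have il' : (i == l) = false by apply/negbTE.
  have lk' : (l == k) = false by apply/negbTE; rewrite eq_sym.
  have kl' : (k == l) = false by apply/negbTE.
  exists [:: Some i; Some i; Some k; Some k; Some l; Some l]; split; first exact: bad3.
  apply: sub_of => y; rewrite !inE => hy; repeat (case/orP: hy => hy); move/eqP: hy => -> /=;
    rewrite ?eqS ?eqxx ?ik' ?ki' ?il' ?li' ?kl' ?lk' /=; cl.
- have ki' : (k == i) = false by apply/negbTE; rewrite eq_sym.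
  have ik' : (i == k) = false by apply/negbTE.
  exists [:: Some i; Some i; Some i; Some k; Some k; Some k]; split; first exact: bad5.
  apply: sub_of => y; rewrite !inE => hy; repeat (case/orP: hy => hy); move/eqP: hy => -> /=;
    rewrite ?eqS ?eqxx ?ik' ?ki' /=; cl.
Qed.
End P2.

Local Open Scope ring_scope.

Section P1.
Variable n : nat.
Local Notation elT := (elT n).
Local Notation monA := (monA n).
Local Notation monT := (monT n).

Lemma coef_bT (p m : monT) : (bT p) m = (m == p)%:R.
Proof. by rewrite -bTE ffunE. Qed.

Lemma coef_mul_bT (g m : monT) (y : elT) :
  (mulT (bT g) y) m = \sum_q (if mulmonT g q == Some m then y q else 0).
Proof.
rewrite ffunE (bigD1 g) //= [X in _ + X]big1 => [|p hp]; last first.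
  by rewrite big1 // => q _; rewrite coef_bT (negbTE hp) mul0r; case: (_ == _).
rewrite addr0; apply: eq_bigr => q _; rewrite coef_bT eqxx mul1r //.
Qed.

Lemma mulmonA_set (b c d : bool) (S T U : {set 'I_(n.-1)}) :
  mulmonA (b, S) (c, T) = Some (d, U) -> U = S :|: T.
Proof. by rewrite mulmonAE; case: ifP => // _ [_ ->]. Qed.

Lemma step (j : 'I_(n.-1)) (W L : {set 'I_(n.-1)}) (y : elT) :
  j \notin W -> j \notin L ->
  (forall u : monA, y (u, (true, W)) = (u == (true, L))%:R) ->
  forall u : monA, (mulT (Vbar j) y) (u, (true, W)) = (u == (true, [set j] :|: L))%:R.
Proof.
move=> jW jL hy u.
rewrite VbarE mulTDl ffunE /vl /vr !coef_mul_bT.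
rewrite [X in _ + X]big1 ?addr0 => [|q _]; last first.
  case: q => q1 [c T]; rewrite /mulmonT /= mA_0l.
  case e: (mulmonA (false, [set j]) (c, T)) => [[d U]|] //=.
  case: eqP => // -[] _ _ eW; rewrite eW in e.
  move: (mulmonA_set e) => eU; move: jW; rewrite eU !inE eqxx //.
rewrite (bigD1 ((true, L), (true, W))) //= [X in _ + X]big1 ?addr0 => [|q hq]; last first.
  case: q hq => q1 q2 hq; rewrite /mulmonT /= mA_0l.
  case: (mulmonA (false, [set j]) q1) => [r|] //=.
  case: eqP => // -[_ e2]; rewrite e2 hy; rewrite e2 in hq.
  case: eqP => // e; by rewrite e eqxx in hq.
rewrite /mulmonT /= mA_0l mA_disj //=; last first.
  by apply/setP => x; rewrite !inE; case: eqP => // ->; rewrite (negbTE jL).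
rewrite hy eqxx.
case: eqP => [[->]|h]; first by rewrite eqxx.
case: eqP => // e; case: h; by rewrite e.
Qed.


Lemma CQ (i k : 'I_(n.-1)) : i != k ->
  mulT (c2 i + d2 i) (a2 k + b2 k) =
  bT ((true, [set i] :|: [set k]), (true, [set i])) + bT ((true, [set i]), (true, [set i] :|: [set k])).
Proof.
move=> h; rewrite mulTDl !mulTDr /c2 /d2 /a2 /b2; mc.
by rewrite !mA_disj ?set1I0 //=.
Qed.

Lemma VbE (i : nat) (h : (i.-1 < n.-1)%N) : (0 < i)%N -> Vb n i = Vbar (Ordinal h).
Proof.
move=> hi; rewrite /Vb (big_pred1 (Ordinal h)) // => k /=.
rewrite -val_eqE /=; case: i hi h => //= i' _ _; by rewrite eqSS.
Qed.

Definition Lset (m0 k : nat) : {set 'I_(n.-1)} :=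
  [set j : 'I_(n.-1) | ((j : nat) == 0%N) || ((m0 <= j.+1)%N && (j.+1 < m0 + k)%N)].
Definition Wset : {set 'I_(n.-1)} := [set j : 'I_(n.-1) | (j < 2)%N].

Lemma induct (X : elT) :
  (forall u : monA, X (u, (true, Wset)) = (u == (true, Lset 3 0))%:R) ->
  forall k m0, (3 <= m0)%N -> (m0 + k <= n)%N ->
  forall u : monA, (mulT (prodT [seq Vb n i | i <- iota m0 k]) X) (u, (true, Wset)) =
                   (u == (true, Lset m0 k))%:R.
Proof.
move=> hX; elim => [|k IH] m0 h3 hk u /=.
  rewrite mul1T hX; congr ((u == (true, _))%:R).
  by apply/setP => j; rewrite !inE; lia.
have hj : (m0.-1 < n.-1)%N by lia.
rewrite (VbE hj) ?mulTA; last by lia.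
rewrite (step (W := Wset) (L := Lset m0.+1 k)).
- congr ((u == (true, _))%:R); apply/setP => j; rewrite !inE -val_eqE /=; lia.
- rewrite !inE /=; lia.
- rewrite !inE /=; lia.
- by move=> v; rewrite IH //; lia.
Qed.

End P1.

Lemma part1 (n : nat) (hn : (3 <= n)%N) :
  prodT ([:: Vb n 1; Vb n 1; Vb n 1; Vb n 2; Vb n 2]
           ++ [seq Vb n i | i <- iota 3 (n - 3)]) != 0.
Proof.
have h0 : (0 < n.-1)%N by lia.
have h1 : (1 < n.-1)%N by lia.
rewrite (@VbE n 1 h0) // (@VbE n 2 h1) //.
set j0 := Ordinal h0; set j1 := Ordinal h1.
have ne : j0 != j1 by rewrite -val_eqE.
rewrite prodT_cat.
have eX : prodT [:: Vbar j0; Vbar j0; Vbar j0; Vbar j1; Vbar j1] =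
  bT ((true, [set j0] :|: [set j1]), (true, [set j0])) +
  bT ((true, [set j0]), (true, [set j0] :|: [set j1])).
  rewrite /=; move: (mulT1 (Vbar j1)) (VVV j0) (VV j1) (CQ ne).
  move: (oneT n) (Vbar j0) (Vbar j1) => O A B e hA hB hC.
  by rewrite e (cube_assoc A) hA hB hC.
rewrite eX mulTC.
have eW : Wset n = [set j0] :|: [set j1].
  by apply/setP => j; rewrite !inE -!val_eqE /=; lia.
have eL : Lset n 3 0 = [set j0].
  by apply/setP => j; rewrite !inE -!val_eqE /=; lia.
have nW : ([set j0] :|: [set j1] == [set j0]) = false.
  apply/negbTE/eqP => e; have : j1 \in [set j0] :|: [set j1] by rewrite !inE eqxx orbT.
  by rewrite e inE eq_sym (negbTE ne).
have hX : forall u : monA n, (bT ((true, [set j0] :|: [set j1]), (true, [set j0])) +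
  bT ((true, [set j0]), (true, [set j0] :|: [set j1]))) (u, (true, Wset n)) =
  (u == (true, Lset n 3 0))%:R.
  move=> u; rewrite ffunE !coef_bT eW eL !xpair_eqE /= nW andbF eqxx andbT /=.
  by rewrite add0r.
have hk : (3 + (n - 3) <= n)%N by lia.
have H := induct hX (k := (n - 3)%N) (m0 := 3) (leqnn 3) hk (true, Lset n 3 (n - 3)).
rewrite eqxx in H.
apply/eqP => e; rewrite e ffunE in H.
by move/eqP: H; rewrite eq_sym oner_eq0.
Qed.

Theorem mainTheorem17 (n : nat) (hn : (3 <= n)%N) :
  prodT ([:: Vb n 1; Vb n 1; Vb n 1; Vb n 2; Vb n 2]
           ++ [seq Vb n i | i <- iota 3 (n - 3)]) != 0
  /\ (forall s : seq (option 'I_(n.-1)),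
        (n + 3 <= size s)%N -> prodT [seq @factor n o | o <- s] = 0).
Proof. by split; [exact: part1 | move=> s hs; exact: part2]. Qed.
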